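(* $\psi_{d,\min}(\mathrm{KG}(6,2))=3$.
   Context: $\mathrm{KG}(6,2)$ is the Kneser graph whose vertices are the $2$-element subsets of $\{1,\dots,6\}$, two being adjacent iff disjoint. For a digraph $D$, let $N_+[v]=\{v\}\cup\{u:(v,u)\in E(D)\}$ and for a coloring $c$, $c(U)=\{c(u):u\in U\}$. The directed local chromatic number is $\psi_d(D)=\min_c\max_{v\in V(D)}|c(N_+[v])|$, the minimum over proper colorings $c$ of the underlying undirected graph. For an undirected graph $G$, $\psi_{d,\min}(G)$ is the minimum of $\psi_d(\vec G)$ over all orientations $\vec G$ of $G$ (each edge given exactly one direction). *)

(* Defs.v *)
From mathcomp Require Import all_boot.
Set Implicit Arguments. Unset Strict Implicit. Unset Printing Implicit Defensive.

(* Kneser graph KG(n,k): vertices are k-subsets of {1..n} (here 'I_n), adjacent iff disjoint. *)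
Definition KGvert (n k : nat) := {A : {set 'I_n} | #|A| == k}.

Definition KGadj (n k : nat) (u v : KGvert n k) : bool :=
  [disjoint (val u) & (val v)].

Definition is_orientation (T : finType) (adj : rel T) (o : rel T) : Prop :=
  (forall u v, o u v -> adj u v) /\
  (forall u v, adj u v -> (o u v (+) o v u)).

Definition proper_coloring (T : finType) (adj : rel T) (c : T -> nat) : Prop :=
  forall u v, adj u v -> c u <> c v.

Definition out_closed_nbhd (T : finType) (o : rel T) (v : T) : {set T} :=
  v |: [set u | o v u].

Definition ncolors_out (T : finType) (o : rel T) (c : T -> nat) (v : T) : nat :=
  size (undup [seq c u | u <- enum (out_closed_nbhd o v)]).

(* The directed local chromatic number of the digraph o (whose underlying
   graph is adj):  psi_d = min over proper colorings c of max_v |c(N_+[v])|. *)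
Definition psi_d (T : finType) (adj : rel T) (o : rel T) (m : nat) : Prop :=
  (exists c, proper_coloring adj c /\ forall v, ncolors_out o c v <= m) /\
  (forall c, proper_coloring adj c -> exists v, m <= ncolors_out o c v).

Definition psi_d_min (T : finType) (adj : rel T) (m : nat) : Prop :=
  (exists o, is_orientation adj o /\ psi_d adj o m) /\
  (forall o m', is_orientation adj o -> psi_d adj o m' -> m <= m').

(* Main.v *)
Require Import Defs.
From mathcomp Require Import all_boot.
From mathcomp Require Import zify.
Set Implicit Arguments. Unset Strict Implicit. Unset Printing Implicit Defensive.

Definition Pl : seq (nat*nat) := [:: (0,1);(0,2);(0,3);(0,4);(0,5);(1,2);(1,3);(1,4);(1,5);(2,3);(2,4);(2,5);(3,4);(3,5);(4,5)].
Definition pa i := (nth (0,0) Pl i).1.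
Definition pb i := (nth (0,0) Pl i).2.
Definition disj4 (a b c d : nat) := [&& a != c, a != d, b != c & b != d].
Definition adjT : seq (seq bool) := [:: [:: false; false; false; false; false; false; false; false; false; true; true; true; true; true; true];
 [:: false; false; false; false; false; false; true; true; true; false; false; false; true; true; true];
 [:: false; false; false; false; false; true; false; true; true; false; true; true; false; false; true];
 [:: false; false; false; false; false; true; true; false; true; true; false; true; false; true; false];
 [:: false; false; false; false; false; true; true; true; false; true; true; false; true; false; false];
 [:: false; false; true; true; true; false; false; false; false; false; false; false; true; true; true];
 [:: false; true; false; true; true; false; false; false; false; false; true; true; false; false; true];
 [:: false; true; true; false; true; false; false; false; false; true; false; true; false; true; false];
 [:: false; true; true; true; false; false; false; false; false; true; true; false; true; false; false];
 [:: true; false; false; true; true; false; false; true; true; false; false; false; false; false; true];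
 [:: true; false; true; false; true; false; true; false; true; false; false; false; false; true; false];
 [:: true; false; true; true; false; false; true; true; false; false; false; false; true; false; false];
 [:: true; true; false; false; true; true; false; false; true; false; false; true; false; false; false];
 [:: true; true; false; true; false; true; false; true; false; false; true; false; false; false; false];
 [:: true; true; true; false; false; true; true; false; false; true; false; false; false; false; false]].
Definition adjN i j := nth false (nth [::] adjT i) j.
Definition V := iota 0 15.
Definition Nlist i := filter (adjN i) V.
Fixpoint allbits n : seq (seq bool) :=
  match n with 0 => [:: [::]]
  | n'.+1 => map (cons true) (allbits n') ++ map (cons false) (allbits n') end.
Definition subs i := [seq mask b (Nlist i) | b <- allbits (size (Nlist i))].
Definition indep (s : seq nat) := all (fun x => all (fun y => ~~ adjN x y) s) s.
Definition choices i := [seq s <- subs i | indep s && (size s == 3)].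
Definition edge_ok (p : seq (seq nat)) (i : nat) (s : seq nat) :=
  all (fun j => adjN i j ==> ((j \in s) != (i \in nth [::] p j))) (iota 0 i).
Definition ok1 (p : seq (seq nat)) (s : seq nat) :=
  all (fun a => has (mem a) s ==> indep (s ++ a)) p.
Fixpoint hasF (f : seq nat -> bool) (l : seq (seq nat)) : bool :=
  match l with [::] => false | x :: l' => if f x then true else hasF f l' end.
Fixpoint dfs (k : nat) (p : seq (seq nat)) : bool :=
  match k with 0 => true
  | k'.+1 => hasF (fun s => if edge_ok p (size p) s then if ok1 p s then dfs k' (rcons p s) else false else false) (choices (size p)) end.

Lemma dfs_false : dfs 15 [::] = false.
Proof. vm_compute. reflexivity. Qed.

Lemma inV i : (i \in V) = (i < 15).
Proof. by rewrite mem_iota. Qed.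

Lemma allV1 (p : nat -> bool) : all p V -> forall i, i < 15 -> p i.
Proof. by move=> /allP h i hi; apply: h; rewrite inV. Qed.

Lemma allV2 (p : nat -> nat -> bool) : all (fun i => all (p i) V) V ->
  forall i j, i < 15 -> j < 15 -> p i j.
Proof. by move=> h i j hi hj; apply: (allV1 (allV1 h hi)). Qed.

Lemma hasF_true (f : seq nat -> bool) (l : seq (seq nat)) x : x \in l -> f x -> hasF f l.
Proof.
elim: l => //= y l IH; rewrite inE => /orP[/eqP <- -> //|hx hf].
by case: (f y) => //; apply: IH.
Qed.

Lemma dfs_complete (sol : nat -> seq nat) :
  (forall i, i < 15 -> sol i \in choices i) ->
  (forall i j, j < i -> i < 15 -> adjN i j -> (j \in sol i) != (i \in sol j)) ->
  (forall i j, i < 15 -> j < 15 -> has (mem (sol j)) (sol i) -> indep (sol i ++ sol j)) ->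
  forall k n, n + k = 15 -> dfs k (mkseq sol n).
Proof.
move=> hc he ho; elim=> [//|k IH] n hnk /=.
rewrite size_mkseq.
have hn : n < 15 by lia.
apply: (hasF_true (x := sol n)); first exact: hc.
have -> : edge_ok (mkseq sol n) n (sol n).
  apply/allP => j; rewrite mem_iota => /andP[_ hj]; apply/implyP => ha.
  by rewrite nth_mkseq //; apply: he.
have -> : ok1 (mkseq sol n) (sol n).
  apply/allP => a /mapP [j]; rewrite mem_iota => /andP[_ hj] ->; apply/implyP.
  by apply: ho => //; lia.
by rewrite -mkseqS; apply: IH; lia.
Qed.

Lemma adjN_sym i j : i < 15 -> j < 15 -> adjN j i = adjN i j.
Proof.
have h : all (fun i => all (fun j => adjN j i == adjN i j) V) V by vm_compute.
by move=> hi hj; apply/eqP; apply: (allV2 h).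
Qed.

Lemma deg6 i : i < 15 -> count (adjN i) V = 6.
Proof.
have h : all (fun i => count (adjN i) V == 6) V by vm_compute.
by move=> hi; apply/eqP; apply: (allV1 h).
Qed.

Lemma indep_bound i s : i < 15 -> s \in subs i -> indep s -> size s <= 3.
Proof.
have h : all (fun i => all (fun s => indep s ==> (size s <= 3)) (subs i)) V by vm_compute.
by move=> hi hs hind; have := allV1 h hi => /allP /(_ s hs); rewrite hind.
Qed.

Lemma allbitsP b : b \in allbits (size b).
Proof. by elim: b => [|[] b IH] //=; rewrite mem_cat map_f ?orbT. Qed.

Lemma sol_subs i (P : pred nat) : i < 15 -> (forall j, j < 15 -> P j -> adjN i j) ->
  filter P V \in subs i.
Proof.
move=> hi H.
have -> : filter P V = filter P (Nlist i).
  rewrite /Nlist -filter_predI; apply: eq_in_filter => j; rewrite inV => hj /=.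
  by case: (boolP (P j)) => //= hp; rewrite (H j hj hp).
rewrite filter_mask; apply/mapP; exists (map P (Nlist i)) => //.
by rewrite -(size_map P) allbitsP.
Qed.

Lemma sum_le3 (r : seq nat) f : (forall i, i \in r -> f i <= 3) ->
  \sum_(i <- r) f i <= 3 * size r.
Proof.
elim: r => [|x r IH] hb; first by rewrite big_nil.
rewrite big_cons /= mulnS leq_add //; first by apply: hb; rewrite inE eqxx.
by apply: IH => i hi; apply: hb; rewrite inE hi orbT.
Qed.

Lemma sum_eq3 (r : seq nat) f : (forall i, i \in r -> f i <= 3) ->
  \sum_(i <- r) f i = 3 * size r -> forall i, i \in r -> f i = 3.
Proof.
elim: r => [|x r IH] hb heq i //.
rewrite big_cons /= in heq.
have hx : f x <= 3 by apply: hb; rewrite inE eqxx.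
have hb' : forall i, i \in r -> f i <= 3 by move=> j hj; apply: hb; rewrite inE hj orbT.
have hr := sum_le3 hb'.
rewrite inE => /orP[/eqP -> | hi]; first by lia.
by apply: IH => //; lia.
Qed.

Lemma index_contra (oI : nat -> nat -> bool) (cc : nat -> nat) :
  (forall i j, i < 15 -> j < 15 -> oI i j -> adjN i j) ->
  (forall i j, i < 15 -> j < 15 -> adjN i j -> oI i j (+) oI j i) ->
  (forall i j k, i < 15 -> j < 15 -> k < 15 -> oI i j -> oI i k -> cc j = cc k) ->
  (forall i j, i < 15 -> j < 15 -> adjN i j -> cc i != cc j) -> False.
Proof.
move=> Ha Hb Hc Hd.
pose sol i := filter (oI i) V.
have hsol : forall i j, (j \in sol i) = (j < 15) && oI i j.
  by move=> i j; rewrite mem_filter inV andbC.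
have hind : forall i, i < 15 -> indep (sol i).
  move=> i hi; apply/allP => x; rewrite hsol => /andP[hx ox].
  apply/allP => y; rewrite hsol => /andP[hy oy].
  apply/negP => hxy; have := Hd x y hx hy hxy.
  by rewrite (Hc i x y hi hx hy ox oy) eqxx.
have hsz : forall i, i < 15 -> size (sol i) <= 3.
  move=> i hi; apply: (indep_bound hi) (hind i hi).
  by apply: sol_subs => // j hj; apply: Ha.
have hdeg : forall i, i < 15 -> count (oI i) V + count (fun j => oI j i) V = 6.
  move=> i hi; rewrite -count_predUI.
  have -> : count (predI (oI i) (fun j => oI j i)) V = 0.
    rewrite (@eq_in_count _ _ pred0) ?count_pred0 // => j; rewrite inV => hj /=.
    apply/negbTE/negP => /andP[h1 h2].
    by have := Hb i j hi hj (Ha _ _ hi hj h1); rewrite h1 h2.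
  rewrite addn0 -(deg6 hi); apply: eq_in_count => j; rewrite inV => hj /=.
  case h1: (oI i j); first by rewrite (Ha _ _ hi hj h1).
  case h2: (oI j i) => /=; first by rewrite -(adjN_sym hi hj) (Ha _ _ hj hi h2).
  by apply/esym/negbTE/negP => hadj; have := Hb i j hi hj hadj; rewrite h1 h2.
have cnt : forall a, count a V = \sum_(j <- V) (a j : nat).
  by move=> a; rewrite -sum1_count big_mkcond /=; apply: eq_bigr => j _; case: (a j).
have hswap : \sum_(i <- V) count (oI i) V = \sum_(i <- V) count (fun j => oI j i) V.
  rewrite (eq_bigr (fun i => \sum_(j <- V) (oI i j : nat))); last by move=> i _; rewrite cnt.
  rewrite [RHS](eq_bigr (fun i => \sum_(j <- V) (oI j i : nat))); last by move=> i _; rewrite cnt.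
  by rewrite exchange_big.
have htot : \sum_(i <- V) (count (oI i) V + count (fun j => oI j i) V) = 90.
  rewrite (eq_big_seq (fun _ => 6)); first by rewrite big_const_seq.
  by move=> i; rewrite inV => hi; apply: hdeg.
have htot2 : \sum_(i <- V) count (oI i) V + \sum_(i <- V) count (fun j => oI j i) V = 90.
  by rewrite -big_split.
rewrite -hswap in htot2.
have h45 : \sum_(i <- V) size (sol i) = 3 * size V.
  rewrite (eq_bigr (fun i => count (oI i) V)); last by move=> i _; rewrite size_filter.
  have -> : size V = 15 by []. lia.
have h3 : forall i, i < 15 -> size (sol i) = 3.
  move=> i hi; apply: (@sum_eq3 V (fun i => size (sol i))); rewrite ?inV //.
  by move=> j; rewrite inV; apply: hsz.
suff : dfs 15 [::] by rewrite dfs_false.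
apply: (@dfs_complete sol _ _ _ 15 0 erefl).
- move=> i hi; rewrite mem_filter hind //= h3 // eqxx /=.
  by apply: sol_subs => // j hj; apply: Ha.
- move=> i j hji hi hadj; rewrite !hsol hi.
  have hj : j < 15 by lia.
  by rewrite hj /=; have := Hb i j hi hj hadj; case: (oI i j); case: (oI j i).
- move=> i j hi hj /hasP [z hzi hzj0].
  have hzj : z \in sol j := hzj0.
  have hz : forall x, x \in sol i ++ sol j -> (x < 15) /\ cc x = cc z.
    move=> x; rewrite mem_cat !hsol => /orP[/andP[hx ox]|/andP[hx ox]]; split => //.
      by move: hzi; rewrite hsol => /andP[hz oz]; apply: (Hc i).
    by move: hzj; rewrite hsol => /andP[hz oz]; apply: (Hc j).
  apply/allP => x /hz [hx ex]; apply/allP => y /hz [hy ey].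
  apply/negP => hxy; have := Hd x y hx hy hxy.
  by rewrite ex ey eqxx.
Qed.
Lemma disj2 (a b c d : 'I_6) :
  [disjoint [set a; b] & [set c; d]] = [&& a != c, a != d, b != c & b != d].
Proof.
by rewrite disjoints_subset subUset !sub1set !inE !negb_or !andbA.
Qed.

Lemma inord_eq (a c : nat) : a < 6 -> c < 6 -> (inord a == inord c :> 'I_6) = (a == c).
Proof. by move=> ha hc; rewrite -val_eqE /= !inordK. Qed.

Lemma v0P : #|[set (ord0 : 'I_6); ord_max]| == 2.
Proof. by rewrite cards2. Qed.
Definition v0 : KGvert 6 2 := @exist _ (fun A : {set 'I_6} => #|A| == 2) _ v0P.

Definition gset i : {set 'I_6} := [set inord (pa i); inord (pb i)].
Definition g i : KGvert 6 2 := insubd v0 (gset i).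

Lemma pab i : i < 15 -> [&& pa i < 6, pb i < 6 & pa i != pb i].
Proof.
have h : all (fun i => [&& pa i < 6, pb i < 6 & pa i != pb i]) V by vm_compute.
exact: (allV1 h).
Qed.

Lemma val_g i : i < 15 -> val (g i) = gset i.
Proof.
move=> hi; have /and3P [ha hb hab] := pab hi.
rewrite /g insubdK //.
change (#|gset i| == 2); by rewrite /gset cards2 inord_eq // hab.
Qed.

Lemma adjN_formula i j : i < 15 -> j < 15 ->
  adjN i j = disj4 (pa i) (pb i) (pa j) (pb j).
Proof.
have h : all (fun i => all (fun j => adjN i j == disj4 (pa i) (pb i) (pa j) (pb j)) V) V
  by vm_compute.
by move=> hi hj; apply/eqP; apply: (allV2 h).
Qed.

Lemma adj_g i j : i < 15 -> j < 15 -> KGadj (g i) (g j) = adjN i j.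
Proof.
move=> hi hj; have /and3P [ha hb _] := pab hi; have /and3P [hc hd _] := pab hj.
by rewrite /KGadj !val_g // /gset disj2 !inord_eq // adjN_formula.
Qed.

Lemma mono (o : rel (KGvert 6 2)) (c : KGvert 6 2 -> nat) :
  is_orientation (@KGadj 6 2) o -> proper_coloring (@KGadj 6 2) c ->
  (forall v, ncolors_out o c v <= 2) ->
  forall v u1 u2, o v u1 -> o v u2 -> c u1 = c u2.
Proof.
move=> [Hsub _] Hp Hn v u1 u2 h1 h2; apply/eqP; apply: contraT => hne.
have hv1 : c v != c u1 by apply/eqP; apply: Hp; apply: Hsub.
have hv2 : c v != c u2 by apply/eqP; apply: Hp; apply: Hsub.
have := Hn v; rewrite /ncolors_out.
have sub : {subset [:: c v; c u1; c u2] <= undup [seq c u | u <- enum (out_closed_nbhd o v)]}.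
  move=> x hx; rewrite mem_undup; move: hx; rewrite !inE => /or3P [] /eqP ->; apply: map_f;
    by rewrite mem_enum /out_closed_nbhd !inE ?eqxx ?h1 ?h2 ?orbT.
have hu : uniq [:: c v; c u1; c u2] by rewrite /= !inE negb_or hv1 hv2 hne.
by move=> hle2; have := leq_trans (uniq_leq_size hu sub) hle2.
Qed.

Lemma lower (o : rel (KGvert 6 2)) (c : KGvert 6 2 -> nat) :
  is_orientation (@KGadj 6 2) o -> proper_coloring (@KGadj 6 2) c ->
  exists v, 3 <= ncolors_out o c v.
Proof.
move=> Ho Hp.
case: (boolP [exists v, 3 <= ncolors_out o c v]) => [/existsP //|].
rewrite negb_exists => /forallP Hn.
have Hn' : forall v, ncolors_out o c v <= 2 by move=> v; have := Hn v; rewrite -ltnNge.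
have Hm := mono Ho Hp Hn'.
case: Ho => Hsub Hx.
exfalso; apply: (@index_contra (fun i j => o (g i) (g j)) (fun j => c (g j))).
- by move=> i j hi hj h; rewrite -adj_g //; apply: Hsub.
- by move=> i j hi hj h; apply: Hx; rewrite adj_g.
- by move=> i j k _ _ _ h1 h2; apply: (Hm (g i)).
- by move=> i j hi hj h; apply/eqP; apply: Hp; rewrite adj_g.
Qed.

Lemma ex_lohi (u : KGvert 6 2) :
  exists p : 'I_6 * 'I_6, (p.1 != p.2) && (val u == [set p.1; p.2]).
Proof.
by case/cards2P: (valP u) => x [y [hxy e]]; exists (x, y); rewrite /= hxy e eqxx.
Qed.
Definition lohi u := xchoose (ex_lohi u).
Definition pidx (a b : nat) := index (minn a b, maxn a b) Pl.
Definition idx (u : KGvert 6 2) : nat := pidx (lohi u).1 (lohi u).2.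

Lemma pidx_ok a b c d : a < 6 -> b < 6 -> c < 6 -> d < 6 -> a != b -> c != d ->
  (pidx a b < 15) && (adjN (pidx a b) (pidx c d) == disj4 a b c d).
Proof.
have h : all (fun a => all (fun b => all (fun c => all (fun d =>
   (a != b) ==> (c != d) ==> (pidx a b < 15) && (adjN (pidx a b) (pidx c d) == disj4 a b c d))
   (iota 0 6)) (iota 0 6)) (iota 0 6)) (iota 0 6) by vm_compute.
move=> ha hb hc hd hab hcd.
move/allP: h => /(_ a); rewrite mem_iota ha => /(_ isT) /allP /(_ b); rewrite mem_iota hb => /(_ isT).
move/allP => /(_ c); rewrite mem_iota hc => /(_ isT) /allP /(_ d); rewrite mem_iota hd => /(_ isT).
by rewrite hab hcd.
Qed.

Lemma idx_props (u v : KGvert 6 2) : (idx u < 15) && (KGadj u v == adjN (idx u) (idx v)).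
Proof.
rewrite /KGadj /idx /lohi.
move: (xchooseP (ex_lohi u)) (xchooseP (ex_lohi v)).
case: (xchoose (ex_lohi u)) => a b; case: (xchoose (ex_lohi v)) => c d /=.
move=> /andP [h1 /eqP ->] /andP [h2 /eqP ->]; rewrite disj2.
have := pidx_ok (ltn_ord a) (ltn_ord b) (ltn_ord c) (ltn_ord d) h1 h2.
by case/andP => -> /eqP -> /=; apply/eqP.
Qed.

Lemma idx_lt u : idx u < 15.
Proof. by case/andP: (idx_props u u). Qed.
Lemma adj_idx u v : KGadj u v = adjN (idx u) (idx v).
Proof. by case/andP: (idx_props u v) => _ /eqP. Qed.

Definition outT : seq (seq nat) := [:: [:: 9; 10; 11]; [:: 6; 7; 8]; [:: 5; 7; 8; 10; 11]; [:: 5; 6; 8; 9; 11]; [:: 5; 6; 7; 9; 10]; [::]; [:: 10; 11]; [:: 9; 11]; [:: 9; 10]; [:: 14]; [:: 13]; [:: 12]; [:: 0; 1; 4; 5; 8]; [:: 0; 1; 3; 5; 7]; [:: 0; 1; 2; 5; 6]].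
Definition colT : seq nat := [:: 0; 0; 0; 0; 0; 1; 1; 1; 1; 2; 2; 2; 3; 3; 3].
Definition oT i j := j \in nth [::] outT i.
Definition Lc i := nth 0 colT i :: [seq nth 0 colT j | j <- nth [::] outT i].

Lemma upper_facts i j : i < 15 -> j < 15 ->
  [&& adjN i j ==> (oT i j (+) oT j i), adjN i j ==> (nth 0 colT i != nth 0 colT j)
    & size (undup (Lc i)) <= 3].
Proof.
have h : all (fun i => all (fun j => [&& adjN i j ==> (oT i j (+) oT j i),
   adjN i j ==> (nth 0 colT i != nth 0 colT j) & size (undup (Lc i)) <= 3]) V) V by vm_compute.
exact: (allV2 h).
Qed.

Definition o0 : rel (KGvert 6 2) := fun u v => KGadj u v && oT (idx u) (idx v).
Definition c0 (u : KGvert 6 2) : nat := nth 0 colT (idx u).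

Lemma KGadj_sym (u v : KGvert 6 2) : KGadj v u = KGadj u v.
Proof. by rewrite /KGadj disjoint_sym. Qed.

Theorem mainTheorem4 : psi_d_min (@KGadj 6 2) 3.
Proof.
have Hor : is_orientation (@KGadj 6 2) o0.
  split; first by move=> u v /andP [].
  move=> u v h; rewrite /o0 h KGadj_sym h /=.
  have /and3P [h1 _ _] := upper_facts (idx_lt u) (idx_lt v).
  by rewrite -adj_idx h in h1.
split.
- exists o0; split => //; split; last by move=> c hc; apply: lower.
  exists c0; split.
  + move=> u v h; apply/eqP.
    have /and3P [_ h2 _] := upper_facts (idx_lt u) (idx_lt v).
    by rewrite -adj_idx h in h2.
  + move=> v; rewrite /ncolors_out.
    have /and3P [_ _ h3] := upper_facts (idx_lt v) (idx_lt v).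
    apply: leq_trans h3.
    apply: uniq_leq_size; first exact: undup_uniq.
    move=> x; rewrite !mem_undup => /mapP [w]; rewrite mem_enum /out_closed_nbhd !inE.
    case/orP => [/eqP -> -> | /andP [_ hw] ->]; first by rewrite /c0 eqxx.
    by apply/orP; right; apply: map_f.
- move=> o m' Ho [[c [hc hle]] _].
  have [v hv] := lower Ho hc.
  exact: leq_trans hv (hle v).
Qed.
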